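(* Let $\mathcal M=(Q,s_{in},s_T,s_F,\delta)$ be a Turing machine with input that never moves its input head outside the input tape. There is a closed term ${\tt trans}_{\mathcal M}$ and a constant $c$ such that for every term $k$ and every configuration $C$ with input tape string $i$: (1) if a final configuration $D$ is reachable from $C$ in $n$ transition steps, then ${\tt trans}_{\mathcal M}\,k\,\ulcorner C\urcorner\to_{det}^{m} k\,\ulcorner D\urcorner$ for some $m\le c\,(n+1)\,|i|\log_2|i|$; (2) if no final configuration is reachable from $C$, then ${\tt trans}_{\mathcal M}\,k\,\ulcorner C\urcorner$ diverges, i.e. it admits an infinite $\to_{det}$ reduction sequence.
   Context: Deterministic $\lambda$-calculus $\Lambda_{\tt det}$: terms $t ::= v \mid t\,v$, values $v ::= x\mid \lambda x.t$, evaluation contexts $E ::= [\cdot]\mid E\,v$, and $E[(\lambda x.t)v]\to_{det} E[t\{x:=v\}]$; $\to_{det}^m$ means exactly $m$ steps. Encodings: a character $a_j$ of an ordered alphabet $\Sigma=\{a_1<\dots<a_p\}$ is $\ulcorner a_j\urcorner:=\lambda x_1\ldots\lambda x_p.x_j$; strings over $\Sigma$ are $\ulcorner\varepsilon\urcorner:=\lambda x_1\ldots\lambda x_p.\lambda x_\varepsilon.x_\varepsilon$, $\ulcorner a_j r\urcorner:=\lambda x_1\ldots\lambda x_p.\lambda x_\varepsilon.x_j\ulcorner r\urcorner$. Reversed binary: $\mathrm{bin}(0)=\varepsilon$, for $n>0$ $\mathrm{bin}(n)=b_0\cdots b_\ell$ with $n=\sum_j b_j 2^j$, $b_\ell=1$,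 encoded as a string over $\{0<1\}$. Turing machines with input: $\mathbb B_I=\{0<1<\mathsf L<\mathsf R\}$, $\mathbb B_W=\{0<1<\Box\}$ ($\Box$ blank). A machine is $\mathcal M=(Q,s_{in},s_T,s_F,\delta)$ with finite ordered set of states $Q=\{s_1<\dots<s_m\}$, initial state $s_{in}$, final states $s_T,s_F$, and partial transition function $\delta:\mathbb B_I\times\mathbb B_W\times Q\rightharpoonup\{-1,+1,0\}\times\mathbb B_W\times\{\leftarrow,\rightarrow,\downarrow\}\times Q$, defined on $(b,a,s)$ only if $s\notin\{s_T,s_F\}$. A configuration is $(i,n\mid w_l,a,w_r\mid s)$ with $i=\mathsf L s'\mathsf R$, $s'\in\{0,1\}^*$, the read-only input tape string, $n\in\mathbb N$ the input-head position, $w_l,w_r\in\mathbb B_W^*$ the work tape to the left/right of the work head, $a\in\mathbb B_W$ the work-head cell, $s\in Q$; it is final if $s\in\{s_T,s_F\}$ (final configurations do not evolve). Transition: let $b$ be the character of $i$ at position $n$ (counting from $0$) and $\delta(b,a,s)=(d\mid a',\mu\mid s')$. Then $C\to_{\mathcal M} D$ where $D$ has input position $n+d$, state $s'$, and work part: if $\mu=\downarrow$, $(w_l,a',w_r)$; if $\mu=\leftarrow$ and $w_l=w a''$, $(w,a'',a'w_r)$, and if $w_l=\varepsilon$, $(\varepsilon,\Box,a'w_r)$; if $\mu=\rightarrow$ and $w_r=a''w$, $(w_l a',a'',w)$, and if $w_r=\varepsilon$, $(w_la',\Box,\varepsilon)$. The input string $i$ is unchanged. The encoding of a configuration is $\ulcorner(i,n\mid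 w_l,a,w_r\mid s)\urcorner:=\lambda x.\,x\,\ulcorner i\urcorner\,\ulcorner\mathrm{bin}(n)\urcorner\,\ulcorner w_l^{R}\urcorner\,\ulcorner a\urcorner\,\ulcorner w_r\urcorner\,\ulcorner s\urcorner$, with $i$ encoded as a string over $\mathbb B_I$, $w_l^R$ (reversal of $w_l$) and $w_r$ as strings over $\mathbb B_W$, $a$ as a character of $\mathbb B_W$, $s$ as a character of $Q$. Note $|i|\ge 2$. *)

(* Defs.v *)
From Stdlib Require Import Reals ZArith List Arith.
Import ListNotations.

Inductive tm : Type :=
| tval : val -> tm
| tapp : tm -> val -> tm
with val : Type :=
| vvar : nat -> val
| vlam : tm -> val.

Fixpoint shift_t (d c : nat) (t : tm) : tm :=
  match t with
  | tval v => tval (shift_v d c v)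
  | tapp t1 v => tapp (shift_t d c t1) (shift_v d c v)
  end
with shift_v (d c : nat) (v : val) : val :=
  match v with
  | vvar n => if c <=? n then vvar (n + d) else vvar n
  | vlam t => vlam (shift_t d (S c) t)
  end.

Fixpoint subst_t (j : nat) (s : val) (t : tm) : tm :=
  match t with
  | tval v => tval (subst_v j s v)
  | tapp t1 v => tapp (subst_t j s t1) (subst_v j s v)
  end
with subst_v (j : nat) (s : val) (v : val) : val :=
  match v with
  | vvar n => if n =? j then s else if j <? n then vvar (n - 1) else vvar n
  | vlam t => vlam (subst_t (S j) (shift_v 1 0 s) t)
  end.

Inductive ectx : Type :=
| hole : ectx
| eapp : ectx -> val -> ectx.

Fixpoint plug (E : ectx) (t : tm) : tm :=
  match E with
  | hole => t
  | eapp E' v => tapp (plug E' t) v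
  end.

Inductive det_step : tm -> tm -> Prop :=
| det_beta : forall E t v,
    det_step (plug E (tapp (tval (vlam t)) v)) (plug E (subst_t 0 v t)).

Inductive nsteps {A : Type} (R : A -> A -> Prop) : nat -> A -> A -> Prop :=
| nsteps0 : forall x, nsteps R 0 x x
| nstepsS : forall n x y z, R x y -> nsteps R n y z -> nsteps R (S n) x z.

Definition diverges (t : tm) : Prop :=
  exists f : nat -> tm, f 0 = t /\ forall n, det_step (f n) (f (S n)).

Fixpoint closed_t (d : nat) (t : tm) : Prop :=
  match t with
  | tval v => closed_v d v
  | tapp t1 v => closed_t d t1 /\ closed_v d v
  end
with closed_v (d : nat) (v : val) : Prop :=
  match v with
  | vvar n => n < d
  | vlam t => closed_t (S d) t
  end.

Definition closed (t : tm) : Prop := closed_t 0 t.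

Fixpoint lams (n : nat) (t : tm) : tm :=
  match n with
  | 0 => t
  | S n' => tval (vlam (lams n' t))
  end.

(** character a_{j+1} (0-based index j) of an alphabet of size p:
    λx_1...λx_p. x_{j+1} *)
Definition enc_char (p j : nat) : val :=
  vlam (lams (p - 1) (tval (vvar (p - 1 - j)))).

Fixpoint enc_str (p : nat) (s : list nat) : val :=
  match s with
  | [] => vlam (lams p (tval (vvar 0)))
  | j :: r => vlam (lams p (tapp (tval (vvar (p - j))) (enc_str p r)))
  end.

(** reversed binary: least significant bit first, no trailing zeros *)
Fixpoint pos_bits (p : positive) : list nat :=
  match p with
  | xH => [1]
  | xO q => 0 :: pos_bits q
  | xI q => 1 :: pos_bits q
  end.

Definition bin (n : nat) : list nat :=
  match N.of_nat n with
  | N0 => []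
  | Npos p => pos_bits p
  end.

Inductive bI : Type := I0 | I1 | IL | IR.
Inductive bW : Type := W0 | W1 | WB.
Inductive idir : Type := Dm1 | D0 | Dp1.
Inductive wmove : Type := MLeft | MRight | MStay.

Definition bI_idx (b : bI) : nat := match b with I0 => 0 | I1 => 1 | IL => 2 | IR => 3 end.
Definition bW_idx (a : bW) : nat := match a with W0 => 0 | W1 => 1 | WB => 2 end.
Definition idir_Z (d : idir) : Z := match d with Dm1 => (-1)%Z | D0 => 0%Z | Dp1 => 1%Z end.

(** States Q = {s_1 < ... < s_m} are represented by 0-based indices 0..m-1. *)
Record TM : Type := mkTM {
  nstates : nat;
  s_in : nat;
  s_T : nat;
  s_F : nat;
  delta : bI -> bW -> nat -> option (idir * bW * wmove * nat)
}.

Definition valid_TM (M : TM) : Prop :=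
  s_in M < nstates M /\ s_T M < nstates M /\ s_F M < nstates M /\
  forall b a s d a' mu s',
    delta M b a s = Some (d, a', mu, s') ->
    s < nstates M /\ s' < nstates M /\ s <> s_T M /\ s <> s_F M.

Definition input_head_stays (M : TM) : Prop :=
  forall b a s d a' mu s',
    delta M b a s = Some (d, a', mu, s') ->
    (b = IL -> d <> Dm1) /\ (b = IR -> d <> Dp1).

(** configuration (i, n | w_l, a, w_r | s); w_l stored left-to-right *)
Record config : Type := mkConfig {
  c_in : list bI;
  c_pos : nat;
  c_wl : list bW;
  c_a : bW;
  c_wr : list bW;
  c_st : nat
}.

Definition valid_config (M : TM) (C : config) : Prop :=
  (exists s' : list bI, Forall (fun b => b = I0 \/ b = I1) s' /\
                        c_in C = IL :: s' ++ [IR]) /\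
  c_pos C < length (c_in C) /\
  c_st C < nstates M.

Definition final (M : TM) (C : config) : Prop :=
  c_st C = s_T M \/ c_st C = s_F M.

Definition move_work (wl : list bW) (a' : bW) (wr : list bW) (mu : wmove)
  : list bW * bW * list bW :=
  match mu with
  | MStay => (wl, a', wr)
  | MLeft =>
      match rev wl with
      | [] => ([], WB, a' :: wr)
      | a'' :: w => (rev w, a'', a' :: wr)
      end
  | MRight =>
      match wr with
      | [] => (wl ++ [a'], WB, [])
      | a'' :: w => (wl ++ [a'], a'', w)
      end
  end.

Inductive tm_step (M : TM) : config -> config -> Prop :=
| tm_step_intro : forall i n wl a wr s b d a' mu s' n' wl2 a2 wr2,
    nth_error i n = Some b ->
    delta M b a s = Some (d, a', mu, s') ->
    Z.of_nat n' = (Z.of_nat n + idir_Z d)%Z ->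
    move_work wl a' wr mu = (wl2, a2, wr2) ->
    tm_step M (mkConfig i n wl a wr s) (mkConfig i n' wl2 a2 wr2 s').

Definition enc_config (M : TM) (C : config) : val :=
  vlam (tapp (tapp (tapp (tapp (tapp (tapp (tval (vvar 0))
    (enc_str 4 (map bI_idx (c_in C))))
    (enc_str 2 (bin (c_pos C))))
    (enc_str 3 (map bW_idx (rev (c_wl C)))))
    (enc_char 3 (bW_idx (c_a C))))
    (enc_str 3 (map bW_idx (c_wr C))))
    (enc_char (nstates M) (c_st C))).

(* Main.v *)
From Stdlib Require Import String Reals ZArith List Arith Lia Lra Psatz.
Require Import Defs.
Import ListNotations.

Scheme tm_ind2 := Induction for tm Sort Prop
with val_ind2 := Induction for val Sort Prop.
Combined Scheme tmval_ind from tm_ind2, val_ind2.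

Definition steps := nsteps det_step.

Lemma det_beta0 t v : det_step (tapp (tval (vlam t)) v) (subst_t 0 v t).
Proof. exact (det_beta hole t v). Qed.

Lemma det_app_ctx t t' v : det_step t t' -> det_step (tapp t v) (tapp t' v).
Proof. intros H; destruct H. exact (det_beta (eapp E v) t v0). Qed.

Lemma step_l m t t1 t' : det_step t t1 -> steps m t1 t' -> steps (S m) t t'.
Proof. intros; econstructor; eauto. Qed.

Lemma steps0 t : steps 0 t t.
Proof. constructor. Qed.

Lemma steps_trans m1 m2 t1 t2 t3 : steps m1 t1 t2 -> steps m2 t2 t3 -> steps (m1+m2) t1 t3.
Proof. unfold steps; induction 1; simpl; intros; auto. econstructor; eauto. Qed.

Lemma steps_app m t t' v : steps m t t' -> steps m (tapp t v) (tapp t' v).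
Proof. unfold steps; induction 1; econstructor; eauto using det_app_ctx. Qed.

Fixpoint apps (t : tm) (vs : list val) : tm :=
  match vs with [] => t | v :: vs' => apps (tapp t v) vs' end.

Lemma steps_apps m t t' vs : steps m t t' -> steps m (apps t vs) (apps t' vs).
Proof. revert t t'; induction vs; simpl; intros; auto. apply IHvs, steps_app; auto. Qed.

Lemma apps_app t vs ws : apps t (vs ++ ws) = apps (apps t vs) ws.
Proof. revert t; induction vs; simpl; auto. Qed.

Lemma closed_mono_all :
  (forall t d d', closed_t d t -> d <= d' -> closed_t d' t) /\
  (forall v d d', closed_v d v -> d <= d' -> closed_v d' v).
Proof.
  apply tmval_ind; simpl; intros.
  - eapply H; eauto.
  - destruct H1; split; [eapply H|eapply H0]; eauto.
  - lia.
  - eapply H; eauto; lia.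
Qed.

Lemma subst_closed_all :
  (forall t d, closed_t d t -> forall j s, d <= j -> subst_t j s t = t) /\
  (forall v d, closed_v d v -> forall j s, d <= j -> subst_v j s v = v).
Proof.
  apply tmval_ind; simpl; intros.
  - f_equal; eauto.
  - destruct H1; f_equal; eauto.
  - destruct (Nat.eqb_spec n j); [lia|]. destruct (Nat.ltb_spec j n); [lia|]. auto.
  - f_equal; eapply H; eauto; lia.
Qed.

Lemma shift_closed_all :
  (forall t d, closed_t d t -> forall k c, d <= c -> shift_t k c t = t) /\
  (forall v d, closed_v d v -> forall k c, d <= c -> shift_v k c v = v).
Proof.
  apply tmval_ind; simpl; intros.
  - f_equal; eauto.
  - destruct H1; f_equal; eauto.
  - destruct (Nat.leb_spec c n); [lia|]. auto.
  - f_equal; eapply H; eauto; lia.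
Qed.

Lemma subst_shift_all :
  (forall t j s, subst_t j s (shift_t 1 j t) = t) /\
  (forall v j s, subst_v j s (shift_v 1 j v) = v).
Proof.
  apply tmval_ind; simpl; intros; try (f_equal; eauto; fail).
  destruct (Nat.leb_spec j n); simpl.
  - destruct (Nat.eqb_spec (n+1) j); [lia|]. destruct (Nat.ltb_spec j (n+1)); [|lia].
    f_equal; lia.
  - destruct (Nat.eqb_spec n j); [lia|]. destruct (Nat.ltb_spec j n); [lia|]. auto.
Qed.

Definition cl (v : val) := closed_v 0 v.

Lemma subst_cl v j s : cl v -> subst_v j s v = v.
Proof. intros H; eapply (proj2 subst_closed_all); eauto; lia. Qed.
Lemma shift_cl v k c : cl v -> shift_v k c v = v.
Proof. intros H; eapply (proj2 shift_closed_all); eauto; lia. Qed.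
Lemma cl_mono v d : cl v -> closed_v d v.
Proof. intros H; eapply (proj2 closed_mono_all); eauto; lia. Qed.

Lemma closed_lams m d t : closed_t (m + d) t -> closed_t d (lams m t).
Proof. revert d; induction m; simpl; intros; auto. apply IHm. rewrite Nat.add_succ_r; auto. Qed.

Lemma cl_enc_str p l : cl (enc_str p l).
Proof.
  unfold cl; induction l; simpl.
  - apply closed_lams. simpl. lia.
  - apply closed_lams. simpl. split; [lia|]. apply (proj2 closed_mono_all) with 0; auto; lia.
Qed.

Lemma cl_enc_char p j : cl (enc_char p j).
Proof. unfold cl, enc_char; simpl. apply closed_lams. simpl. lia. Qed.

Create HintDb cldb.
Hint Resolve cl_enc_str cl_enc_char : cldb.

Ltac atoms :=
  repeat match goal with
  | |- context [subst_v ?j ?s ?v] => rewrite (subst_cl v j s) by (auto with cldb)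
  | |- context [shift_v ?k ?c ?v] => rewrite (shift_cl v k c) by (auto with cldb)
  end.

Ltac simp := cbn [subst_t subst_v shift_t shift_v Nat.eqb Nat.ltb Nat.leb Nat.add Nat.sub apps c_in c_pos c_wl c_a c_wr c_st]; atoms.

Ltac redex := match goal with
  | |- det_step (tapp (tval _) _) _ => apply det_beta0
  | |- det_step (tapp _ _) _ => apply det_app_ctx; redex end.

Ltac step := eapply step_l; [ redex | simp ].

Ltac solve_cl := unfold cl; cbn [closed_v closed_t Nat.sub];
  repeat match goal with |- _ /\ _ => split end;
  try lia; try (apply cl_mono; auto with cldb).

Lemma subst_lams m j v t : cl v -> subst_t j v (lams m t) = lams m (subst_t (m + j) v t).
Proof.
  intros Hv; revert j; induction m; intros j; simpl; auto.
  rewrite (shift_cl v 1 0 Hv), IHm. replace (m + S j) with (S (m + j)) by lia; reflexivity.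
Qed.

Lemma det_apps t t' vs : det_step t t' -> det_step (apps t vs) (apps t' vs).
Proof. revert t t'; induction vs; simpl; intros; auto. apply IHvs, det_app_ctx; auto. Qed.

Lemma beta_apps t w rest : steps 1 (apps (tapp (tval (vlam t)) w) rest) (apps (subst_t 0 w t) rest).
Proof. eapply step_l; [apply det_apps, det_beta0|constructor]. Qed.

Lemma const_lams m t vs rest : length vs = m -> Forall cl vs -> closed_t 0 t ->
  steps m (apps (lams m t) (vs ++ rest)) (apps t rest).
Proof.
  revert vs; induction m; intros vs Hl Hc Hv.
  - destruct vs; [|discriminate]. constructor.
  - destruct vs as [|w vs]; [discriminate|]. inversion Hc; subst. simpl.
    eapply step_l. { apply det_apps, det_beta0. }
    rewrite subst_lams by auto. rewrite (proj1 subst_closed_all t 0 Hv) by lia.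
    apply IHm; auto.
Qed.

Lemma char_core m x vs rest d : length vs = S m -> x <= m -> Forall cl vs ->
  steps (S m) (apps (tval (vlam (lams m (tval (vvar x))))) (vs ++ rest))
              (apps (tval (nth (m - x) vs d)) rest).
Proof.
  revert x vs; induction m; intros x vs Hl Hx Hc.
  - destruct vs as [|w [|]]; try discriminate. assert (x = 0) by lia; subst.
    cbn [apps app]. eapply step_l. { apply det_apps, det_beta0. } simpl. constructor.
  - destruct vs as [|w vs]; [discriminate|]. inversion Hc; subst. cbn [apps app].
    eapply step_l. { apply det_apps, det_beta0. }
    rewrite subst_lams by auto. cbn [subst_t subst_v].
    destruct (Nat.eqb_spec x (S m + 0)).
    + subst. replace (S m - (S m+0)) with 0 by lia. cbn [nth].
      apply (const_lams (S m) (tval w) vs rest); auto.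
    + destruct (Nat.ltb_spec (S m + 0) x); [lia|].
      replace (S m - x) with (S (m - x)) by lia. cbn [nth].
      apply IHm; auto; simpl in Hl; lia.
Qed.

Lemma str_core m x w vs rest d : length vs = S m -> x <= m -> Forall cl vs -> cl w ->
  steps (S m) (apps (tval (vlam (lams m (tapp (tval (vvar x)) w)))) (vs ++ rest))
              (apps (tval (nth (m - x) vs d)) (w :: rest)).
Proof.
  revert x vs; induction m; intros x vs Hl Hx Hc Hw.
  - destruct vs as [|u [|]]; try discriminate. assert (x = 0) by lia; subst.
    cbn [apps app]. eapply step_l. { apply det_apps, det_beta0. } simpl.
    rewrite (subst_cl w _ _ Hw). constructor.
  - destruct vs as [|u vs]; [discriminate|]. inversion Hc; subst. cbn [apps app].
    eapply step_l. { apply det_apps, det_beta0. }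
    rewrite subst_lams by auto. cbn [subst_t subst_v]. rewrite (subst_cl w _ _ Hw).
    destruct (Nat.eqb_spec x (S m + 0)).
    + subst. replace (S m - (S m+0)) with 0 by lia. cbn [nth].
      apply (const_lams (S m) (tapp (tval u) w) vs rest); auto. simpl; split; auto.
    + destruct (Nat.ltb_spec (S m + 0) x); [lia|].
      replace (S m - x) with (S (m - x)) by lia. cbn [nth].
      apply IHm; auto; simpl in Hl; lia.
Qed.

Lemma disp_char p j vs rest : length vs = p -> j < p -> Forall cl vs ->
  steps p (apps (tval (enc_char p j)) (vs ++ rest)) (apps (tval (nth j vs (vvar 0))) rest).
Proof.
  intros Hl Hj Hc. unfold enc_char.
  destruct p as [|p]; [lia|]. rewrite Nat.sub_succ, Nat.sub_0_r.
  replace j with (p - (p - j)) at 2 by lia.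
  apply char_core; auto. lia.
Qed.

Lemma disp_cons p j r vs rest : length vs = S p -> j < p -> Forall cl vs ->
  steps (S p) (apps (tval (enc_str p (j :: r))) (vs ++ rest))
              (apps (tval (nth j vs (vvar 0))) (enc_str p r :: rest)).
Proof.
  intros Hl Hj Hc. cbn [enc_str].
  replace j with (p - (p - j)) at 2 by lia.
  apply str_core; auto. lia. apply cl_enc_str.
Qed.

Lemma disp_nil p vs rest : length vs = S p -> Forall cl vs ->
  steps (S p) (apps (tval (enc_str p [])) (vs ++ rest)) (apps (tval (nth p vs (vvar 0))) rest).
Proof.
  intros Hl Hc. cbn [enc_str].
  replace p with (p - 0) at 3 by lia.
  apply char_core; auto. lia.
Qed.

Definition red (B : nat) (t t' : tm) := exists m, m <= B /\ steps m t t'.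

Lemma red_step B t t1 t' : det_step t t1 -> red B t1 t' -> red (S B) t t'.
Proof. intros H [m [Hm Hs]]. exists (S m); split; [lia|]. eapply step_l; eauto. Qed.
Lemma red_trans B1 B2 t1 t2 t3 : red B1 t1 t2 -> red B2 t2 t3 -> red (B1 + B2) t1 t3.
Proof. intros [m1 [H1 S1]] [m2 [H2 S2]]. exists (m1+m2); split; [lia|]. eapply steps_trans; eauto. Qed.
Lemma red_refl t : red 0 t t.
Proof. exists 0; split; auto; constructor. Qed.
Lemma red_mono B B' t t' : red B t t' -> B <= B' -> red B' t t'.
Proof. intros [m [H1 S1]] H; exists m; split; auto; lia. Qed.
Lemma red_steps m t t' : steps m t t' -> red m t t'.
Proof. intros; exists m; auto. Qed.
Lemma red_apps B t t' vs : red B t t' -> red B (apps t vs) (apps t' vs).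
Proof. intros [m [H1 S1]]; exists m; split; auto. apply steps_apps; auto. Qed.

Ltac rstep := eapply red_step; [ redex | simp ].

Ltac spine t := match t with
  | tapp ?f ?a => let r := spine f in
      match r with (?h, ?l) => constr:((h, l ++ [a])) end
  | tval ?h => constr:((h, @nil val)) end.

Ltac solve_Forall := repeat constructor; solve_cl.

Ltac dispatch lem k :=
  match goal with |- red _ ?t _ =>
   let r := spine t in match r with (?h, ?l) =>
    let l' := eval cbn [app] in l in
    let vs := eval cbn [firstn] in (firstn k l') in
    let rs := eval cbn [skipn] in (skipn k l') in
    change t with (apps (tval h) (vs ++ rs));
    eapply red_trans; [ apply red_steps; eapply lem; first [reflexivity | lia | solve_Forall] | cbn [nth apps] ] end end.

Ltac dnil p := dispatch (@disp_nil p) (S p).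
Ltac dcons p := dispatch (@disp_cons p) (S p).
Ltac dchar p := dispatch (@disp_char p) p.

Ltac to_apps := match goal with |- red _ ?t _ =>
   let r := spine t in match r with (?h, ?l) =>
    let l' := eval cbn [app] in l in change t with (apps (tval h) l') end end.

Open Scope string_scope.

Inductive nt := NV (x : string) | NL (x : string) (b : nt) | NA (f a : nt) | NC (v : val).

Fixpoint lk (x : string) (env : list string) : option nat :=
  match env with [] => None | y :: env' => if String.eqb x y then Some 0 else option_map S (lk x env') end.

Fixpoint ct (env : list string) (t : nt) : option tm :=
  match t with
  | NA f a => match ct env f, cv env a with Some f', Some a' => Some (tapp f' a') | _, _ => None end
  | NV x => option_map (fun n => tval (vvar n)) (lk x env)
  | NL x b => option_map (fun b' => tval (vlam b')) (ct (x :: env) b)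
  | NC v => Some (tval v)
  end
with cv (env : list string) (t : nt) : option val :=
  match t with
  | NV x => option_map vvar (lk x env)
  | NL x b => option_map vlam (ct (x :: env) b)
  | NC v => Some v
  | NA _ _ => None
  end.

Definition cc (t : nt) : val := match cv [] t with Some v => v | None => vvar 999 end.

Notation "f @ a" := (NA f a) (at level 40, left associativity).
Fixpoint Ls (xs : list string) (b : nt) : nt := match xs with [] => b | x :: xs' => NL x (Ls xs' b) end.
Notation "'λ' xs , b" := (Ls xs b) (at level 200, xs at level 0).
Coercion NV : string >-> nt.

Ltac comp t := let r := eval cbv beta iota zeta delta [cc cv ct lk Ls option_map String.eqb Ascii.eqb Bool.eqb] in (cc t) in exact r.

Definition NIL2 : val := enc_str 2 [].
Definition ONE2 : val := enc_str 2 [1].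
Definition C0 (r : string) : nt := λ ["x0";"x1";"xe"], "x0" @ r.
Definition C1 (r : string) : nt := λ ["x0";"x1";"xe"], "x1" @ r.

Ltac comp2 t := let r := eval cbv beta iota zeta delta [cc cv ct lk Ls option_map String.eqb Ascii.eqb Bool.eqb C0 C1] in (cc t) in exact r.
Definition INC : val := ltac:(comp2 (
  λ ["self";"bits";"k"], "bits"
     @ (λ ["r";"self";"k"], "k" @ C1 "r")
     @ (λ ["r";"self";"k"], "self" @ "self" @ "r" @ (λ ["r'"], "k" @ C0 "r'"))
     @ (λ ["self";"k"], "k" @ NC ONE2)
     @ "self" @ "k")).

Lemma cl_ONE2 : cl ONE2. Proof. apply cl_enc_str. Qed.
Lemma cl_NIL2 : cl NIL2. Proof. apply cl_enc_str. Qed.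
Hint Resolve cl_ONE2 cl_NIL2 : cldb.
Lemma cl_INC : cl INC. Proof. unfold INC; solve_cl. Qed.
Hint Resolve cl_INC : cldb.

Fixpoint inc_l (l : list nat) : list nat :=
  match l with [] => [1] | 0 :: r => 1 :: r | _ :: r => 0 :: inc_l r end.

Lemma INC_spec bits k : Forall (fun j => j < 2) bits -> cl k ->
  red (10 * (length bits + 1)) (apps (tval INC) [INC; enc_str 2 bits; k])
      (tapp (tval k) (enc_str 2 (inc_l bits))).
Proof.
  revert k; induction bits as [|b r IH]; intros k Hb Hk.
  - eapply red_mono. cbn [apps]. rstep. rstep. rstep.
    dnil 2. rstep. rstep. apply red_refl. simpl; lia.
  - inversion Hb; subst. destruct b as [|[|b]]; [| |lia].
    + eapply red_mono. cbn [apps]. rstep. rstep. rstep.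
      dcons 2. rstep. rstep. rstep. apply red_refl. simpl; lia.
    + eapply red_mono. cbn [apps]. rstep. rstep. rstep.
      dcons 2. rstep. rstep. rstep.
      eapply red_trans. { apply IH; auto. solve_cl. }
      rstep. apply red_refl. simpl; lia.
Qed.

Definition DEC : val := ltac:(comp2 (
  λ ["self";"bits";"k"], "bits"
     @ (λ ["r";"self";"k"], "self" @ "self" @ "r" @ (λ ["r'"], "k" @ C1 "r'"))
     @ (λ ["r";"self";"k"], "r" @ (λ ["q";"k";"r"], "k" @ C0 "r") @ (λ ["q";"k";"r"], "k" @ C0 "r")
                               @ (λ ["k";"r"], "k" @ NC NIL2) @ "k" @ "r")
     @ (λ ["self";"k"], "k" @ NC NIL2)
     @ "self" @ "k")).
Lemma cl_DEC : cl DEC. Proof. unfold DEC; solve_cl. Qed.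
Hint Resolve cl_DEC : cldb.

Fixpoint dec_l (l : list nat) : list nat :=
  match l with [] => [] | 0 :: r => 1 :: dec_l r
  | _ :: r => match r with [] => [] | _ => 0 :: r end end.

Lemma DEC_spec bits k : Forall (fun j => j < 2) bits -> cl k ->
  red (20 * (length bits + 1)) (apps (tval DEC) [DEC; enc_str 2 bits; k])
      (tapp (tval k) (enc_str 2 (dec_l bits))).
Proof.
  revert k; induction bits as [|b r IH]; intros k Hb Hk.
  - eapply red_mono. cbn [apps]. rstep. rstep. rstep.
    dnil 2. rstep. rstep. apply red_refl. simpl; lia.
  - inversion Hb; subst. destruct b as [|[|b]]; [| |lia].
    + eapply red_mono. cbn [apps]. rstep. rstep. rstep.
      dcons 2. rstep. rstep. rstep.
      eapply red_trans. { apply IH; auto. solve_cl. }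
      rstep. apply red_refl. simpl; lia.
    + destruct r as [|j r2].
      * eapply red_mono. cbn [apps]. rstep. rstep. rstep.
        dcons 2. rstep. rstep. rstep. dnil 2. rstep. rstep. apply red_refl. simpl; lia.
      * inversion H2; subst. destruct j as [|[|j]]; [| |lia].
        all: eapply red_mono; [cbn [apps]; rstep; rstep; rstep; dcons 2; rstep; rstep; rstep;
           dcons 2; rstep; rstep; rstep; apply red_refl | simpl; lia].
Qed.

Definition TAIL : val := ltac:(comp2 (λ ["l";"k"], "l" @ "k" @ "k" @ "k" @ "k" @ "k")).
Lemma cl_TAIL : cl TAIL. Proof. unfold TAIL; solve_cl. Qed.
Hint Resolve cl_TAIL : cldb.

Definition DROP : val := ltac:(comp2 (
  λ ["self";"bits";"l";"k"], "bits"
     @ (λ ["r";"self";"l";"k"], "self" @ "self" @ "r" @ "l" @ (λ ["l1"], "self" @ "self" @ "r" @ "l1" @ "k"))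
     @ (λ ["r";"self";"l";"k"], "self" @ "self" @ "r" @ "l" @ (λ ["l1"], "self" @ "self" @ "r" @ "l1"
                                   @ (λ ["l2"], NC TAIL @ "l2" @ "k")))
     @ (λ ["self";"l";"k"], "k" @ "l")
     @ "self" @ "l" @ "k")).
Lemma cl_DROP : cl DROP. Proof. unfold DROP; solve_cl. Qed.
Hint Resolve cl_DROP : cldb.

Fixpoint valn (l : list nat) : nat := match l with [] => 0 | b :: r => b + 2 * valn r end.
Fixpoint dcost (l : list nat) : nat := match l with [] => 30 | _ :: r => 2 * dcost r + 30 end.

Lemma Forall_skipn {A} (P : A -> Prop) n l : Forall P l -> Forall P (skipn n l).
Proof. revert l; induction n; intros [|x l] H; simpl; auto. inversion H; auto. Qed.

Lemma skipn_cons_S {A} n (l : list A) x rest : skipn n l = x :: rest -> skipn (S n) l = rest.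
Proof. revert l; induction n; intros [|y l] E; simpl in *; try discriminate.
  - injection E; auto.
  - apply IHn; auto. Qed.

Lemma DROP_spec bits l k : Forall (fun j => j < 2) bits -> Forall (fun j => j < 4) l ->
  valn bits <= length l -> cl k ->
  red (dcost bits) (apps (tval DROP) [DROP; enc_str 2 bits; enc_str 4 l; k])
      (tapp (tval k) (enc_str 4 (skipn (valn bits) l))).
Proof.
  revert l k; induction bits as [|b r IH]; intros l k Hb Hl Hv Hk.
  - eapply red_mono. cbn [apps]. rstep. rstep. rstep. rstep.
    dnil 2. rstep. rstep. rstep. apply red_refl. simpl; lia.
  - inversion Hb; subst. cbn [valn] in *. destruct b as [|[|b]]; [| |lia].
    + eapply red_mono. cbn [apps]. rstep. rstep. rstep. rstep.
      dcons 2. rstep. rstep. rstep. rstep.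
      eapply red_trans. { apply IH; auto. lia. solve_cl. }
      rstep.
      eapply red_trans. { apply IH; auto. apply Forall_skipn; auto.
         rewrite length_skipn; lia. }
      rewrite skipn_skipn. replace (valn r + valn r) with (0 + 2 * valn r) by lia.
      apply red_refl. simpl; lia.
    + eapply red_mono. cbn [apps]. rstep. rstep. rstep. rstep.
      dcons 2. rstep. rstep. rstep. rstep.
      eapply red_trans. { apply IH; auto. lia. solve_cl. }
      rstep.
      eapply red_trans. { apply IH; auto. apply Forall_skipn; auto.
         rewrite length_skipn; lia. solve_cl. }
      rstep. rewrite skipn_skipn.
      assert (Hs : Forall (fun j => j < 4) (skipn (valn r + valn r) l)) by (apply Forall_skipn; auto).
      assert (Hlen : length (skipn (valn r + valn r) l) > 0) by (rewrite length_skipn; lia).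
      destruct (skipn (valn r + valn r) l) as [|j rest] eqn:E; [simpl in Hlen; lia|].
      inversion Hs; subst.
      rstep. rstep. dcons 4.
      replace (skipn (S (2 * valn r)) l) with rest.
      destruct j as [|[|[|[|j]]]]; [apply red_refl..|lia].
      { replace (S (2 * valn r)) with (S (valn r + valn r)) by lia.
        symmetry; eapply skipn_cons_S; eauto. }
      simpl; lia.
Qed.

Open Scope string_scope.

Definition nCFG (i bn wl a wr s : nt) : nt := λ ["xcfg"], "xcfg" @ i @ bn @ wl @ a @ wr @ s.
Definition nCONS3 (j : nat) (w : nt) : nt :=
  λ ["y0";"y1";"y2";"ye"], (match j with 0 => NV "y0" | 1 => NV "y1" | _ => NV "y2" end) @ w.
Definition nOMEGA : nt := (λ ["z"], "z" @ "z") @ (λ ["z"], "z" @ "z").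
Ltac comp3 t := let r := eval cbv beta iota zeta delta [cc cv ct lk Ls option_map String.eqb Ascii.eqb Bool.eqb
   C0 C1 nCFG nCONS3 nOMEGA bW_idx] in (cc t) in exact r.

Definition NIL3 : val := enc_str 3 [].

Definition RV (a' : bW) (S' : val) (j : nat) : val := ltac:(let F := constr:(fun xa : bW => 
  λ ["w";"self";"i";"bn";"wl"], "self" @ "self" @ nCFG "i" "bn" (nCONS3 (bW_idx xa) "wl") (NC (enc_char 3 j)) "w" (NC S')) in destruct a'; [comp3 (F W0) | comp3 (F W1) | comp3 (F WB)]).
Definition REV (a' : bW) (S' : val) : val := ltac:(let F := constr:(fun xa : bW => 
  λ ["self";"i";"bn";"wl"], "self" @ "self" @ nCFG "i" "bn" (nCONS3 (bW_idx xa) "wl") (NC (enc_char 3 2)) (NC NIL3) (NC S')) in destruct a'; [comp3 (F W0) | comp3 (F W1) | comp3 (F WB)]).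
Definition LV (a' : bW) (S' : val) (j : nat) : val := ltac:(let F := constr:(fun xa : bW => 
  λ ["w";"self";"i";"bn";"wr"], "self" @ "self" @ nCFG "i" "bn" "w" (NC (enc_char 3 j)) (nCONS3 (bW_idx xa) "wr") (NC S')) in destruct a'; [comp3 (F W0) | comp3 (F W1) | comp3 (F WB)]).
Definition LEV (a' : bW) (S' : val) : val := ltac:(let F := constr:(fun xa : bW => 
  λ ["self";"i";"bn";"wr"], "self" @ "self" @ nCFG "i" "bn" (NC NIL3) (NC (enc_char 3 2)) (nCONS3 (bW_idx xa) "wr") (NC S')) in destruct a'; [comp3 (F W0) | comp3 (F W1) | comp3 (F WB)]).

Definition nMOVE (mu : wmove) (a' : bW) (S' : val) : nt :=
  match mu with
  | MStay => λ ["bn2"], "self" @ "self" @ nCFG "i" "bn2" "wl" (NC (enc_char 3 (bW_idx a'))) "wr" (NC S')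
  | MRight => λ ["bn2"], "wr" @ NC (RV a' S' 0) @ NC (RV a' S' 1) @ NC (RV a' S' 2) @ NC (REV a' S')
                  @ "self" @ "i" @ "bn2" @ "wl"
  | MLeft => λ ["bn2"], "wl" @ NC (LV a' S' 0) @ NC (LV a' S' 1) @ NC (LV a' S' 2) @ NC (LEV a' S')
                  @ "self" @ "i" @ "bn2" @ "wr"
  end.
Definition nPOS (d : idir) (K : nt) : nt :=
  match d with
  | Dp1 => NC INC @ NC INC @ "bn" @ K
  | Dm1 => NC DEC @ NC DEC @ "bn" @ K
  | D0 => K @ "bn"
  end.

Ltac comp4 t := let r := eval cbv beta iota zeta delta [cc cv ct lk Ls option_map String.eqb Ascii.eqb Bool.eqb
   C0 C1 nCFG nCONS3 nOMEGA nPOS nMOVE bW_idx] in (cc t) in exact r.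

Definition ACT (d : idir) (mu : wmove) (a' : bW) (S' : val) : val :=
  ltac:(let F := constr:(fun dd mm => λ ["self";"i";"bn";"wl";"wr"], nPOS dd (nMOVE mm a' S')) in
        destruct d, mu; [comp4 (F Dm1 MLeft)|comp4 (F Dm1 MRight)|comp4 (F Dm1 MStay)
                        |comp4 (F D0 MLeft)|comp4 (F D0 MRight)|comp4 (F D0 MStay)
                        |comp4 (F Dp1 MLeft)|comp4 (F Dp1 MRight)|comp4 (F Dp1 MStay)]).
Definition AOM : val := ltac:(comp3 (λ ["self";"i";"bn";"wl";"wr"], nOMEGA)).
Definition Aval (N : nat) (o : option (idir * bW * wmove * nat)) : val :=
  match o with None => AOM | Some (d, a', mu, s') => ACT d mu a' (enc_char N s') end.
Definition HV (A0 A1 A2 : val) : val := ltac:(comp3 (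
  λ ["rest";"self";"i";"bn";"wl";"a";"wr"], "a" @ NC A0 @ NC A1 @ NC A2 @ "self" @ "i" @ "bn" @ "wl" @ "wr")).
Definition HE : val := ltac:(comp3 (λ ["rest"], "rest")).
Definition BN (H0 H1 H2 H3 : val) : val := ltac:(comp3 (
  λ ["self";"i";"bn";"wl";"a";"wr";"suf"], "suf" @ NC H0 @ NC H1 @ NC H2 @ NC H3 @ NC HE
       @ "self" @ "i" @ "bn" @ "wl" @ "a" @ "wr")).
Definition BF (SQ : val) : val := ltac:(comp3 (
  λ ["self";"i";"bn";"wl";"a";"wr";"suf"], λ ["y"], "y" @ nCFG "i" "bn" "wl" "a" "wr" (NC SQ))).

Definition Hq (M : TM) (q : nat) (b : bI) : val :=
  HV (Aval (nstates M) (delta M b W0 q)) (Aval (nstates M) (delta M b W1 q)) (Aval (nstates M) (delta M b WB q)).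
Definition Bq (M : TM) (q : nat) : val :=
  if orb (Nat.eqb q (s_T M)) (Nat.eqb q (s_F M)) then BF (enc_char (nstates M) q)
  else BN (Hq M q I0) (Hq M q I1) (Hq M q IL) (Hq M q IR).
Definition SD (M : TM) : val := vlam (apps (tval (vvar 0)) (map (Bq M) (seq 0 (nstates M)))).
Definition XV (sd : val) : val := ltac:(comp3 (
  λ ["i";"bn";"wl";"a";"wr";"s";"self"], NC DROP @ NC DROP @ "bn" @ "i"
     @ (λ ["suf"], NC sd @ "s" @ "self" @ "i" @ "bn" @ "wl" @ "a" @ "wr" @ "suf"))).
Definition LOOPf (sd : val) : val := ltac:(comp3 (λ ["self";"c"], "c" @ NC (XV sd) @ "self")).
Definition LOOP (M : TM) : val := LOOPf (SD M).

Lemma cl_NIL3 : cl NIL3. Proof. apply cl_enc_str. Qed.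
Hint Resolve cl_NIL3 : cldb.
Lemma cl_RV a' S' j : cl S' -> cl (RV a' S' j). Proof. intros; destruct a'; unfold RV; solve_cl. Qed.
Lemma cl_REV a' S' : cl S' -> cl (REV a' S'). Proof. intros; destruct a'; unfold REV; solve_cl. Qed.
Lemma cl_LV a' S' j : cl S' -> cl (LV a' S' j). Proof. intros; destruct a'; unfold LV; solve_cl. Qed.
Lemma cl_LEV a' S' : cl S' -> cl (LEV a' S'). Proof. intros; destruct a'; unfold LEV; solve_cl. Qed.
Hint Resolve cl_RV cl_REV cl_LV cl_LEV : cldb.
Lemma cl_ACT d mu a' S' : cl S' -> cl (ACT d mu a' S'). Proof. intros; destruct d, mu; unfold ACT; solve_cl. Qed.
Lemma cl_AOM : cl AOM. Proof. unfold AOM; solve_cl. Qed.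
Hint Resolve cl_ACT cl_AOM : cldb.
Lemma cl_Aval N o : cl (Aval N o). Proof. destruct o as [[[[d a'] mu] s']|]; simpl; auto with cldb. Qed.
Hint Resolve cl_Aval : cldb.
Lemma cl_HV A0 A1 A2 : cl A0 -> cl A1 -> cl A2 -> cl (HV A0 A1 A2). Proof. intros; unfold HV; solve_cl. Qed.
Lemma cl_HE : cl HE. Proof. unfold HE; solve_cl. Qed.
Hint Resolve cl_HV cl_HE : cldb.
Lemma cl_BN a b c d : cl a -> cl b -> cl c -> cl d -> cl (BN a b c d). Proof. intros; unfold BN; solve_cl. Qed.
Lemma cl_BF a : cl a -> cl (BF a). Proof. intros; unfold BF; solve_cl. Qed.
Hint Resolve cl_BN cl_BF : cldb.
Lemma cl_Hq M q b : cl (Hq M q b). Proof. unfold Hq; auto with cldb. Qed.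
Hint Resolve cl_Hq : cldb.
Lemma cl_Bq M q : cl (Bq M q). Proof. unfold Bq; destruct orb; auto with cldb. Qed.
Hint Resolve cl_Bq : cldb.

Lemma closed_apps d t vs : closed_t d t -> Forall (closed_v d) vs -> closed_t d (apps t vs).
Proof. revert t; induction vs; simpl; intros t H1 H2; auto. inversion H2; subst. apply IHvs; simpl; auto. Qed.

Lemma cl_SD M : cl (SD M).
Proof.
  unfold cl, SD; simpl. apply closed_apps. simpl; lia.
  apply Forall_forall. intros x Hx. apply in_map_iff in Hx. destruct Hx as [q [<- _]].
  apply cl_mono, cl_Bq.
Qed.
Hint Resolve cl_SD : cldb.
Lemma cl_XV sd : cl sd -> cl (XV sd). Proof. intros; unfold XV; solve_cl. Qed.
Hint Resolve cl_XV : cldb.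
Lemma cl_LOOPf sd : cl sd -> cl (LOOPf sd). Proof. intros; unfold LOOPf; solve_cl. Qed.
Lemma cl_LOOP M : cl (LOOP M). Proof. unfold LOOP; apply cl_LOOPf, cl_SD. Qed.
Hint Resolve cl_XV cl_LOOP : cldb.

Lemma subst_apps j v t vs : subst_t j v (apps t vs) = apps (subst_t j v t) (map (subst_v j v) vs).
Proof. revert t; induction vs; simpl; intros; auto. Qed.

Lemma map_cl_id j v vs : Forall cl vs -> map (subst_v j v) vs = vs.
Proof. induction 1; simpl; auto. rewrite subst_cl; auto. f_equal; auto. Qed.

Lemma SD_step M c rest : cl c ->
  red 1 (apps (tval (SD M)) (c :: rest)) (apps (tval c) (map (Bq M) (seq 0 (nstates M)) ++ rest)).
Proof.
  intros Hc. apply red_steps. cbn [apps]. eapply step_l. apply det_apps, det_beta0.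
  rewrite subst_apps, map_cl_id. simpl. rewrite apps_app. constructor.
  apply Forall_forall. intros x Hx. apply in_map_iff in Hx. destruct Hx as [q [<- _]]. apply cl_Bq.
Qed.

Close Scope string_scope.

Lemma bin_S n : bin (S n) = pos_bits (Pos.of_succ_nat n).
Proof. reflexivity. Qed.

Lemma pos_bits_lt2 p : Forall (fun j => j < 2) (pos_bits p).
Proof. induction p; simpl; auto. Qed.
Lemma bin_lt2 n : Forall (fun j => j < 2) (bin n).
Proof. destruct n; [constructor|]. rewrite bin_S. apply pos_bits_lt2. Qed.

Lemma valn_pos p : valn (pos_bits p) = Pos.to_nat p.
Proof. induction p; simpl pos_bits; cbn [valn]; rewrite ?IHp; lia. Qed.
Lemma valn_bin n : valn (bin n) = n.
Proof. destruct n; auto. rewrite bin_S, valn_pos. apply SuccNat2Pos.id_succ. Qed.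

Lemma inc_pos p : inc_l (pos_bits p) = pos_bits (Pos.succ p).
Proof. induction p; simpl; auto. rewrite IHp; auto. Qed.
Lemma inc_bin n : inc_l (bin n) = bin (S n).
Proof. destruct n; auto. rewrite !bin_S, inc_pos. reflexivity. Qed.

Lemma pos_bits_ne p : pos_bits p <> [].
Proof. destruct p; discriminate. Qed.
Lemma dec_pos p : dec_l (pos_bits (Pos.succ p)) = pos_bits p.
Proof.
  induction p; simpl; auto.
  - rewrite IHp; auto.
  - destruct (pos_bits p) eqn:E; auto. exfalso; eapply pos_bits_ne; eauto.
Qed.
Lemma dec_bin n : dec_l (bin n) = bin (n - 1).
Proof.
  destruct n as [|[|n]]; auto. replace (S (S n) - 1) with (S n) by lia. rewrite !bin_S.
  change (Pos.of_succ_nat (S n)) with (Pos.succ (Pos.of_succ_nat n)). apply dec_pos.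
Qed.

Lemma pow_pos_bits p : 2 ^ length (pos_bits p) <= 2 * Pos.to_nat p.
Proof. induction p; simpl pos_bits; cbn [length]; rewrite Nat.pow_succ_r'; rewrite ?Pos2Nat.inj_xO, ?Pos2Nat.inj_xI, ?Pos2Nat.inj_1; simpl; lia. Qed.
Lemma pow_bin n : 2 ^ length (bin n) <= 2 * n + 1.
Proof. destruct n; simpl; auto. rewrite bin_S. pose proof (pow_pos_bits (Pos.of_succ_nat n)).
  rewrite SuccNat2Pos.id_succ in H. lia. Qed.
Lemma len_bin n : length (bin n) <= n.
Proof. destruct n; simpl; auto. rewrite bin_S.
  assert (forall p, length (pos_bits p) <= Pos.to_nat p).
  { intros p; induction p; simpl pos_bits; cbn [length]; rewrite ?Pos2Nat.inj_xO, ?Pos2Nat.inj_xI, ?Pos2Nat.inj_1;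
    try pose proof (Pos2Nat.is_pos p); lia. }
  specialize (H (Pos.of_succ_nat n)). rewrite SuccNat2Pos.id_succ in H. lia. Qed.

Lemma dcost_eq l : dcost l + 30 = 30 * 2 ^ (S (length l)).
Proof. induction l; simpl dcost; cbn [length]; rewrite ?Nat.pow_succ_r' in *; simpl; lia. Qed.
Lemma dcost_bin n : dcost (bin n) <= 60 * (2 * n + 1).
Proof. pose proof (dcost_eq (bin n)). pose proof (pow_bin n). rewrite Nat.pow_succ_r' in H. lia. Qed.

Definition LL M C := apps (tval (LOOP M)) [LOOP M; enc_config M C].

Lemma skipn_map {A B} (f : A -> B) n l : skipn n (map f l) = map f (skipn n l).
Proof. revert l; induction n; intros [|x l]; simpl; auto. Qed.

Lemma skipn_nth_error {A} n (l : list A) x : nth_error l n = Some x -> skipn n l = x :: skipn (S n) l.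
Proof. revert l; induction n; intros [|y l] E; simpl in *; try discriminate. injection E; intros; subst; auto. auto. Qed.

Definition red1 B t t' := exists t1, det_step t t1 /\ red B t1 t'.
Lemma red1_red B t t' : red1 B t t' -> red (S B) t t'.
Proof. intros [t1 [H1 H2]]; eapply red_step; eauto. Qed.
Lemma red1_trans B1 B2 t1 t2 t3 : red1 B1 t1 t2 -> red B2 t2 t3 -> red1 (B1 + B2) t1 t3.
Proof. intros [x [H1 H2]] H3; exists x; split; auto; eapply red_trans; eauto. Qed.

Lemma prefix M C b : c_pos C < length (c_in C) -> c_st C < nstates M ->
  nth_error (c_in C) (c_pos C) = Some b ->
  red1 (14 + nstates M + dcost (bin (c_pos C))) (LL M C)
    (apps (tval (Bq M (c_st C))) [LOOP M; enc_str 4 (map bI_idx (c_in C)); enc_str 2 (bin (c_pos C));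
       enc_str 3 (map bW_idx (rev (c_wl C))); enc_char 3 (bW_idx (c_a C)); enc_str 3 (map bW_idx (c_wr C));
       enc_str 4 (bI_idx b :: map bI_idx (skipn (S (c_pos C)) (c_in C)))]).
Proof.
  intros Hp Hs Hb. destruct C as [i n wl a wr s]; cbn [c_pos c_in c_st c_wl c_a c_wr] in *.
  unfold LL. cbn [apps]. eexists; split. { redex. } simp. eapply red_mono.
  rstep. unfold enc_config. rstep.
  rstep. rstep. rstep. rstep. rstep. rstep. rstep.
  eapply red_trans. { apply DROP_spec. apply bin_lt2. apply Forall_forall; intros x Hx.
     apply in_map_iff in Hx; destruct Hx as [y [<- _]]. destruct y; simpl; lia.
     rewrite valn_bin, length_map; lia. solve_cl. }
  rstep. rewrite valn_bin, skipn_map, (skipn_nth_error _ _ _ Hb).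
  to_apps. eapply red_trans. { apply SD_step; auto with cldb. }
  eapply red_trans. { apply red_steps. apply disp_char. rewrite length_map, length_seq; auto. auto.
    apply Forall_forall. intros x Hx. apply in_map_iff in Hx. destruct Hx as [q [<- _]]. apply cl_Bq. }
  rewrite nth_indep with (d' := Bq M 0) by (rewrite length_map, length_seq; auto).
  rewrite map_nth, seq_nth by auto. simpl. apply red_refl.
  simpl. lia.
Qed.

Definition nextc (C : config) (d : idir) (a' : bW) (mu : wmove) (s' : nat) : config :=
  let n' := match d with Dm1 => c_pos C - 1 | D0 => c_pos C | Dp1 => S (c_pos C) end in
  match move_work (c_wl C) a' (c_wr C) mu with
  | (wl2, a2, wr2) => mkConfig (c_in C) n' wl2 a2 wr2 s' end.

Ltac posd := first [ (eapply red_trans; [apply DEC_spec; [apply bin_lt2|solve_cl]|]; rewrite dec_bin; rstep)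
                    | (eapply red_trans; [apply INC_spec; [apply bin_lt2|solve_cl]|]; rewrite inc_bin; rstep)
                    | rstep ].
Ltac finish := unfold enc_config; cbn [move_work c_in c_pos c_wl c_a c_wr c_st];
  try rewrite rev_unit; try rewrite rev_involutive; apply red_refl.
Ltac run := repeat lazymatch goal with
  | |- red _ (tapp (tapp (tval (LOOP _)) _) _) _ => fail
  | |- red _ ?t _ => let r := spine t in match r with
       | (enc_str 3 [], _) => dnil 3
       | (enc_str 3 (_ :: _), _) => dcons 3
       | _ => rstep end end.

Lemma act_red M C d mu a' s' :
  red (40 + 20 * length (bin (c_pos C)))
    (apps (tval (ACT d mu a' (enc_char (nstates M) s'))) [LOOP M; enc_str 4 (map bI_idx (c_in C));
       enc_str 2 (bin (c_pos C)); enc_str 3 (map bW_idx (rev (c_wl C))); enc_str 3 (map bW_idx (c_wr C))])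
    (LL M (nextc C d a' mu s')).
Proof.
  destruct C as [i n wl a wr s]; unfold nextc, LL; cbn [c_pos c_in c_st c_wl c_a c_wr].
  destruct d, mu; destruct a';
  try (lazymatch goal with |- context [move_work _ _ _ MLeft] => idtac end;
       destruct (rev wl) as [|x w] eqn:E; [|destruct x]);
  try (lazymatch goal with |- context [move_work _ _ _ MRight] => idtac end;
       destruct wr as [|x w]; [|destruct x]);
  (eapply red_mono; [cbn [apps]; do 5 rstep; posd; cbn [map] in *; run;
        cbn [move_work]; try rewrite E; finish
       | lia]).
Qed.

Definition RET M C := vlam (tapp (tval (vvar 0)) (enc_config M C)).
Definition OMv : val := vlam (tapp (tval (vvar 0)) (vvar 0)).
Definition OM : tm := tapp (tval OMv) OMv.

Lemma loop_final M C b : c_pos C < length (c_in C) -> c_st C < nstates M ->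
  nth_error (c_in C) (c_pos C) = Some b -> final M C ->
  red1 (22 + nstates M + dcost (bin (c_pos C))) (LL M C) (tval (RET M C)).
Proof.
  intros Hp Hs Hb Hf.
  replace (22 + nstates M + dcost (bin (c_pos C))) with ((14 + nstates M + dcost (bin (c_pos C))) + 8) by lia.
  eapply red1_trans. { apply prefix; eauto. }
  unfold Bq. replace (orb _ _) with true.
  2:{ destruct Hf as [H|H]; rewrite H, Nat.eqb_refl; auto. rewrite Bool.orb_true_r; auto. }
  eapply red_mono. cbn [apps]. do 7 rstep. unfold RET, enc_config. apply red_refl. lia.
Qed.

Lemma loop_mid M C b : c_pos C < length (c_in C) -> c_st C < nstates M ->
  nth_error (c_in C) (c_pos C) = Some b -> ~ final M C ->
  red1 (50 + nstates M + dcost (bin (c_pos C))) (LL M C)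
   (apps (tval (Aval (nstates M) (delta M b (c_a C) (c_st C)))) [LOOP M; enc_str 4 (map bI_idx (c_in C));
       enc_str 2 (bin (c_pos C)); enc_str 3 (map bW_idx (rev (c_wl C))); enc_str 3 (map bW_idx (c_wr C))]).
Proof.
  intros Hp Hs Hb Hf.
  replace (50 + nstates M + dcost (bin (c_pos C))) with ((14 + nstates M + dcost (bin (c_pos C))) + 36) by lia.
  eapply red1_trans. { apply prefix; eauto. }
  unfold Bq. replace (orb _ _) with false.
  2:{ unfold final in Hf. destruct (Nat.eqb_spec (c_st C) (s_T M)); [tauto|].
      destruct (Nat.eqb_spec (c_st C) (s_F M)); [tauto|]. auto. }
  destruct b, (c_a C); (eapply red_mono; [cbn [apps]; do 7 rstep; cbn [bI_idx]; dcons 4; do 7 rstep;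
     cbn [bW_idx]; dchar 3; apply red_refl | lia]).
Qed.

Lemma loop_none M C b : c_pos C < length (c_in C) -> c_st C < nstates M ->
  nth_error (c_in C) (c_pos C) = Some b -> ~ final M C -> delta M b (c_a C) (c_st C) = None ->
  red1 (55 + nstates M + dcost (bin (c_pos C))) (LL M C) OM.
Proof.
  intros Hp Hs Hb Hf Hd.
  replace (55 + nstates M + dcost (bin (c_pos C))) with ((50 + nstates M + dcost (bin (c_pos C))) + 5) by lia.
  eapply red1_trans. { apply loop_mid; eauto. }
  rewrite Hd. cbn [Aval apps]. eapply red_mono. do 5 rstep. apply red_refl. lia.
Qed.

Lemma loop_some M C b d a' mu s' : c_pos C < length (c_in C) -> c_st C < nstates M ->
  nth_error (c_in C) (c_pos C) = Some b -> ~ final M C -> delta M b (c_a C) (c_st C) = Some (d, a', mu, s') ->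
  red1 (90 + nstates M + dcost (bin (c_pos C)) + 20 * length (bin (c_pos C))) (LL M C) (LL M (nextc C d a' mu s')).
Proof.
  intros Hp Hs Hb Hf Hd.
  replace (90 + nstates M + dcost (bin (c_pos C)) + 20 * length (bin (c_pos C)))
    with ((50 + nstates M + dcost (bin (c_pos C))) + (40 + 20 * length (bin (c_pos C)))) by lia.
  eapply red1_trans. { apply loop_mid; eauto. }
  rewrite Hd. cbn [Aval]. apply act_red.
Qed.

Lemma tm_step_inv M C D : tm_step M C D -> exists b d a' mu s',
  nth_error (c_in C) (c_pos C) = Some b /\ delta M b (c_a C) (c_st C) = Some (d, a', mu, s') /\
  D = nextc C d a' mu s'.
Proof.
  intros H; inversion H; subst. exists b, d, a', mu, s'. cbn [c_in c_pos c_a c_st]. split; auto; split; auto.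
  unfold nextc; cbn [c_wl c_wr c_pos c_in]. rewrite H3. f_equal.
  destruct d; simpl in H2; lia.
Qed.

Lemma valid_nth M C : valid_config M C -> exists b, nth_error (c_in C) (c_pos C) = Some b.
Proof. intros [_ [Hp _]]. destruct (nth_error (c_in C) (c_pos C)) eqn:E; eauto.
  apply nth_error_None in E; lia. Qed.

Lemma valid_len M C : valid_config M C -> 2 <= length (c_in C).
Proof. intros [[s' [_ E]] _]. rewrite E; simpl; rewrite length_app; simpl; lia. Qed.

Lemma last_IR (s : list bI) : nth_error (IL :: s ++ [IR]) (S (length s)) = Some IR.
Proof. simpl. rewrite nth_error_app2 by lia. rewrite Nat.sub_diag; auto. Qed.

Lemma nextc_step M C b d a' mu s' : valid_config M C -> input_head_stays M ->
  nth_error (c_in C) (c_pos C) = Some b -> delta M b (c_a C) (c_st C) = Some (d, a', mu, s') ->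
  tm_step M C (nextc C d a' mu s').
Proof.
  intros HC Hin Hb Hd. destruct C as [i n wl a wr s]. unfold nextc; cbn [c_wl c_wr c_pos c_in c_a c_st] in *.
  destruct (move_work wl a' wr mu) as [[wl2 a2] wr2] eqn:Em.
  econstructor; eauto.
  destruct d; simpl; try lia.
  destruct n; [|lia]. exfalso. destruct HC as [[s0 [_ E]] _]. cbn [c_in] in E; subst i.
  simpl in Hb. injection Hb; intros; subst. destruct (Hin _ _ _ _ _ _ _ Hd) as [H1 _]. apply H1; auto.
Qed.

Lemma valid_pres M C D : valid_TM M -> input_head_stays M -> valid_config M C -> tm_step M C D -> valid_config M D.
Proof.
  intros HM Hin HC Hs. destruct (tm_step_inv _ _ _ Hs) as (b & d & a' & mu & s' & Hb & Hd & ->).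
  destruct HM as (_ & _ & _ & HM). destruct (HM _ _ _ _ _ _ _ Hd) as (_ & Hs' & _).
  destruct HC as [[s0 [Hf E]] [Hp Hst]].
  destruct C as [i n wl a wr s]; unfold nextc; cbn [c_wl c_wr c_pos c_in c_a c_st] in *.
  destruct (move_work wl a' wr mu) as [[wl2 a2] wr2] eqn:Em.
  split; [exists s0; split; auto|]. cbn [c_in c_pos c_st]. split; auto.
  destruct d; try lia. subst i.
  destruct (Nat.eq_dec (S n) (length (IL :: s0 ++ [IR]))); [|lia].
  exfalso. simpl in e. rewrite length_app in e. simpl in e.
  assert (n = S (length s0)) by lia. subst n. rewrite last_IR in Hb. injection Hb; intros; subst.
  destruct (Hin _ _ _ _ _ _ _ Hd) as [_ H2]. apply H2; auto.
Qed.

Lemma final_nostep M C D : valid_TM M -> final M C -> tm_step M C D -> False.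
Proof.
  intros HM Hf Hs. destruct (tm_step_inv _ _ _ Hs) as (b & d & a' & mu & s' & Hb & Hd & _).
  destruct HM as (_ & _ & _ & HM). destruct (HM _ _ _ _ _ _ _ Hd) as (_ & _ & H1 & H2).
  destruct Hf; tauto.
Qed.

Lemma red1_mono B B' t t' : red1 B t t' -> B <= B' -> red1 B' t t'.
Proof. intros [x [H1 H2]] H; exists x; split; auto; eapply red_mono; eauto. Qed.

Definition KK M := 300 + nstates M.

Lemma run_final M : valid_TM M -> input_head_stays M -> forall n C D, valid_config M C ->
  nsteps (tm_step M) n C D -> final M D ->
  red1 (KK M * length (c_in C) * (n + 1)) (LL M C) (tval (RET M D)).
Proof.
  intros HM Hin n. induction n as [|n IH]; intros C D HC Hn Hf.
  - inversion Hn; subst. destruct (valid_nth _ _ HC) as [b Hb].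
    pose proof HC as [_ [Hp Hs]]. pose proof (valid_len _ _ HC).
    eapply red1_mono. apply (loop_final M D b); auto.
    pose proof (dcost_bin (c_pos D)). unfold KK.
    assert (nstates M <= nstates M * length (c_in D)) by nia. nia.
  - inversion Hn; subst. rename y into C1.
    assert (Hnf : ~ final M C) by (intro; eapply final_nostep; eauto).
    destruct (tm_step_inv _ _ _ H0) as (b & d & a' & mu & s' & Hb & Hd & E).
    pose proof HC as [_ [Hp Hs]]. pose proof (valid_len _ _ HC).
    assert (HC1 : valid_config M C1) by (eapply valid_pres; eauto).
    assert (Hi : c_in C1 = c_in C) by (subst C1; unfold nextc; destruct move_work as [[? ?] ?]; auto).
    specialize (IH C1 D HC1 H1 Hf). rewrite Hi in IH.
    eapply red1_mono. eapply red1_trans. apply (loop_some M C b d a' mu s'); auto.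
    rewrite <- E. apply red1_red, IH.
    pose proof (dcost_bin (c_pos C)). pose proof (len_bin (c_pos C)). unfold KK.
    assert (nstates M <= nstates M * length (c_in C)) by nia. nia.
Qed.

Definition NR M C := ~ exists n D, nsteps (tm_step M) n C D /\ final M D.

Definition Good M t := (exists C m, valid_config M C /\ NR M C /\ steps m t (LL M C)) \/ (exists m, steps m t OM).

Lemma OM_step : det_step OM OM.
Proof. unfold OM. apply det_beta0. Qed.

Lemma good_step M : valid_TM M -> input_head_stays M -> forall t, Good M t -> exists t', det_step t t' /\ Good M t'.
Proof.
  intros HM Hin t [(C & m & HC & HN & Hs) | (m & Hs)].
  - destruct m as [|m].
    + inversion Hs; subst.
      assert (Hnf : ~ final M C) by (intro Hf; apply HN; exists 0, C; split; auto; constructor).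
      destruct (valid_nth _ _ HC) as [b Hb]. pose proof HC as [_ [Hp Hst]].
      destruct (delta M b (c_a C) (c_st C)) as [[[[d a'] mu] s']|] eqn:Hd.
      * destruct (loop_some M C b d a' mu s' Hp Hst Hb Hnf Hd) as (t1 & H1 & [m1 [_ H2]]).
        exists t1; split; auto. left. exists (nextc C d a' mu s'), m1. split; [|split; auto].
        { eapply valid_pres; eauto. eapply nextc_step; eauto. }
        intros (n & D & H3 & H4). apply HN. exists (S n), D. split; auto.
        econstructor; eauto. eapply nextc_step; eauto.
      * destruct (loop_none M C b Hp Hst Hb Hnf Hd) as (t1 & H1 & [m1 [_ H2]]).
        exists t1; split; auto. right; eauto.
    + inversion Hs; subst. exists y; split; auto. left; eauto.
  - destruct m as [|m].
    + inversion Hs; subst. exists OM; split; [apply OM_step|]. right; exists 0; constructor.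
    + inversion Hs; subst. exists y; split; auto. right; eauto.
Qed.

From Stdlib Require Import IndefiniteDescription.

Lemma good_div (P : tm -> Prop) : (forall t, P t -> exists t', det_step t t' /\ P t') ->
  forall t, P t -> diverges t.
Proof.
  intros H t0 H0.
  set (f := fun x : {t | P t} => let (t', Ht') := constructive_indefinite_description _ (H (proj1_sig x) (proj2_sig x))
            in exist P t' (proj2 Ht')).
  set (g := fun n => proj1_sig (Nat.iter n f (exist P t0 H0))).
  exists g. split; auto. intros n. unfold g. simpl.
  destruct (Nat.iter n f (exist P t0 H0)) as [x Hx]. unfold f. simpl.
  match goal with |- context [constructive_indefinite_description ?Q ?h] =>
    destruct (constructive_indefinite_description Q h) as [t' Ht'] end. simpl. tauto.
Qed.

Lemma div_app t v : diverges t -> diverges (tapp t v).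
Proof. intros [f [Hf0 Hf1]]. exists (fun n => tapp (f n) v). split; [rewrite Hf0; auto|]. intros; apply det_app_ctx; auto. Qed.

Lemma div_back m t t' : steps m t t' -> diverges t' -> diverges t.
Proof.
  induction 1; auto. intros Hd. destruct (IHnsteps Hd) as [f [Hf0 Hf1]].
  exists (fun n => match n with 0 => x | S n' => f n' end). split; auto.
  intros [|k]; simpl; auto. rewrite <- Hf0 in H; auto.
Qed.

Definition TRANS M : tm := tval (vlam (tval (vlam (tapp (tapp (tapp (tval (LOOP M)) (LOOP M)) (vvar 0)) (vvar 1))))).

Lemma cl_enc_config M C : cl (enc_config M C).
Proof. unfold enc_config; solve_cl. Qed.
Hint Resolve cl_enc_config : cldb.

Lemma trans_red M k C : steps 2 (tapp (tapp (TRANS M) k) (enc_config M C)) (tapp (LL M C) k).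
Proof.
  unfold TRANS. eapply step_l. { apply det_app_ctx, det_beta0. } simp.
  eapply step_l. { apply det_beta0. } simp.
  rewrite (proj2 subst_shift_all). constructor.
Qed.

Lemma RET_step M k D : det_step (tapp (tval (RET M D)) k) (tapp (tval k) (enc_config M D)).
Proof. unfold RET. replace (tapp (tval k) (enc_config M D)) with (subst_t 0 k (tapp (tval (vvar 0)) (enc_config M D))). apply det_beta0. cbn [subst_t subst_v Nat.eqb]. rewrite (subst_cl (enc_config M D)); auto with cldb. Qed.

Lemma real_bound (m c n L : nat) : (m <= c * (n + 1) * L)%nat -> (2 <= L)%nat ->
  (INR m <= INR c * INR (n + 1) * INR L * (ln (INR L) / ln 2))%R.
Proof.
  intros Hm HL.
  assert (Hln2 : (0 < ln 2)%R) by (rewrite <- ln_1; apply ln_increasing; lra).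
  assert (Hr : (1 <= ln (INR L) / ln 2)%R).
  { apply (Rmult_le_reg_r (ln 2)); auto. unfold Rdiv. rewrite Rmult_assoc, Rinv_l by lra.
    rewrite Rmult_1_l, Rmult_1_r. destruct (Rle_lt_or_eq_dec 2 (INR L)).
    - replace 2%R with (INR 2) by (simpl; lra). apply le_INR; auto.
    - left. apply ln_increasing; lra.
    - rewrite <- e; lra. }
  apply le_INR in Hm. rewrite !mult_INR in Hm.
  assert (0 <= INR c * INR (n + 1) * INR L)%R by (repeat apply Rmult_le_pos; apply pos_INR).
  nra.
Qed.

Theorem mainTheorem9 :
  forall M : TM, valid_TM M -> input_head_stays M ->
  exists trans : tm, closed trans /\
  exists c : nat,
  forall (k : val) (C : config), valid_config M C ->
    (forall (n : nat) (D : config),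
        nsteps (tm_step M) n C D -> final M D ->
        exists m : nat,
          nsteps det_step m (tapp (tapp trans k) (enc_config M C))
                            (tapp (tval k) (enc_config M D)) /\
          (INR m <= INR c * INR (n + 1) * INR (length (c_in C))
                    * (ln (INR (length (c_in C))) / ln 2))%R) /\
    ((~ exists (n : nat) (D : config), nsteps (tm_step M) n C D /\ final M D) ->
        diverges (tapp (tapp trans k) (enc_config M C))).
Proof.
  intros M HM Hin. exists (TRANS M). split.
  { unfold closed, TRANS. solve_cl. }
  exists (KK M + 3). intros k C HC. pose proof (valid_len _ _ HC) as HL. split.
  - intros n D Hn Hf.
    destruct (run_final M HM Hin n C D HC Hn Hf) as (t1 & H1 & m1 & Hm1 & Hs1).
    exists (2 + (S m1 + 1)). split.
    + eapply steps_trans. apply trans_red.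
      eapply steps_trans. apply steps_app. eapply step_l; eauto.
      eapply step_l. apply RET_step. constructor.
    + apply real_bound; auto. nia.
  - intros HN. eapply div_back. apply trans_red. apply div_app.
    apply (good_div (Good M)). apply good_step; auto.
    left. exists C, 0. split; auto. split; auto. constructor.
Qed.
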